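(* Let $X$ be a metrizable vector space over $K$ with metric $d_X$, and let $Y$ be a normed (respectively Banach) algebra over $K$ with $d_Y$ the metric induced by its norm. For maps $F_1,F_2:X\to Y$ define $(F_1*F_2)(x)=\frac{F_1(x)F_2(x)}{d_X(x,0)}$ for $x\neq0$ and $(F_1*F_2)(0)=F_1(0)F_2(0)$. Then $B_d(X,Y)$ with multiplication $*$ is a normed (respectively Banach) algebra with norm $\|F\|_{B_d(X,Y)}=d(F,0)$. If $Y$ is unital, then $B_d(X,Y)$ is unital.
   Context: $K$ is $\mathbb{R}$ or $\mathbb{C}$. For maps $F_1,F_2:X\to Y$, $d(F_1,F_2)=\max\left\{\sup_{x\neq0,x\in X}\frac{\|F_1(x)-F_2(x)\|_Y}{d_X(x,0)},\ \|F_1(0)-F_2(0)\|_Y\right\}\in[0,\infty]$, and $B_d(X,Y)$ is the set of maps $F:X\to Y$ with $d(F,0)<\infty$, with pointwise vector operations. A normed algebra has submultiplicative norm $\|ab\|\le\|a\|\|b\|$; a unital one has unit $1$ with $\|1\|=1$. *)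

(* Defs.v *)
From mathcomp Require Import all_boot all_algebra.
From mathcomp Require Import all_classical all_reals all_analysis.
Set Implicit Arguments. Unset Strict Implicit. Unset Printing Implicit Defensive.
Import GRing.Theory Num.Theory.
From mathcomp Require Import complex.
Local Open Scope ring_scope.
Local Open Scope classical_set_scope.

Definition scal (R : realType) (isReal : bool) : numFieldType :=
  if isReal then (R : numFieldType) else (R[i] : numFieldType).

Definition kabs (R : realType) (isReal : bool) : scal R isReal -> R :=
  if isReal return scal R isReal -> R then (fun x : R => `|x|)
  else (fun z : R[i] => Normc.normc z).

Definition kofR (R : realType) (isReal : bool) : R -> scal R isReal :=
  if isReal return R -> scal R isReal then (fun x : R => x)
  else (fun x : R => (real_complex R x : R[i])).

Definition is_metric (R : realType) (T : Type) (d : T -> T -> R) : Prop :=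
  [/\ forall x y, 0 <= d x y,
      forall x y, d x y = 0 <-> x = y,
      forall x y, d x y = d y x &
      forall x y z, d x z <= d x y + d y z].

Definition metric_induces_topology (R : realType) (T : topologicalType)
    (d : T -> T -> R) : Prop :=
  forall (x : T) (A : set T),
    nbhs x A <-> exists2 e : R, 0 < e & [set y | d x y < e] `<=` A.

(* (Possibly non-unital) normed algebras over K, given on a subset S of a   *)
Definition normed_algebra_on (R : realType) (K : fieldType) (absK : K -> R)
    (V : Type) (S : set V) (zero : V) (add : V -> V -> V) (opp : V -> V)
    (scale : K -> V -> V) (mul : V -> V -> V) (norm : V -> R) : Prop :=
  [/\ S zero,
      (forall x y, S x -> S y -> S (add x y)),
      (forall x, S x -> S (opp x)),
      (forall a x, S x -> S (scale a x)) &
      (forall x y, S x -> S y -> S (mul x y))] /\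
  [/\ (forall x y z, S x -> S y -> S z -> add x (add y z) = add (add x y) z),
      (forall x y, S x -> S y -> add x y = add y x),
      (forall x, S x -> add zero x = x) &
      (forall x, S x -> add (opp x) x = zero)] /\
  [/\ (forall a b x, S x -> scale a (scale b x) = scale (a * b) x),
      (forall x, S x -> scale 1 x = x),
      (forall a x y, S x -> S y -> scale a (add x y) = add (scale a x) (scale a y)) &
      (forall a b x, S x -> scale (a + b) x = add (scale a x) (scale b x))] /\
  [/\ (forall x y z, S x -> S y -> S z -> mul x (mul y z) = mul (mul x y) z),
      (forall x y z, S x -> S y -> S z -> mul x (add y z) = add (mul x y) (mul x z)),
      (forall x y z, S x -> S y -> S z -> mul (add x y) z = add (mul x z) (mul y z)),
      (forall a x y, S x -> S y -> scale a (mul x y) = mul (scale a x) y) &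
      (forall a x y, S x -> S y -> scale a (mul x y) = mul x (scale a y))] /\
  [/\ (forall x, S x -> 0 <= norm x),
      (forall x, S x -> norm x = 0 <-> x = zero),
      (forall a x, S x -> norm (scale a x) = absK a * norm x),
      (forall x y, S x -> S y -> norm (add x y) <= norm x + norm y) &
      (forall x y, S x -> S y -> norm (mul x y) <= norm x * norm y)].

Definition complete_on (R : realType) (V : Type) (S : set V)
    (add : V -> V -> V) (opp : V -> V) (norm : V -> R) : Prop :=
  forall u : nat -> V, (forall n, S (u n)) ->
    (forall e : R, 0 < e -> exists N, forall m n, (N <= m)%N -> (N <= n)%N ->
        norm (add (u m) (opp (u n))) < e) ->
    exists2 l, S l &
      forall e : R, 0 < e -> exists N, forall n, (N <= n)%N ->
        norm (add (u n) (opp l)) < e.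

Definition unital_on (R : realType) (V : Type) (S : set V)
    (mul : V -> V -> V) (norm : V -> R) : Prop :=
  exists2 e, S e &
    (forall x, S x -> mul e x = x /\ mul x e = x) /\ norm e = 1.

Section Bd.
Variables (R : realType) (K : fieldType) (X : lmodType K) (Y : lmodType K).
Variables (dX : X -> X -> R) (normY : Y -> R).

Definition dist_fun (F1 F2 : X -> Y) : \bar R :=
  maxe (ereal_sup [set (normY (F1 x - F2 x) / dX x 0)%:E | x in [set x | x != 0]])
       (normY (F1 0 - F2 0))%:E.

Definition Bd : set (X -> Y) := [set F | (dist_fun F (fun _ => 0%R) < +oo)%E].

Definition Bd_norm (F : X -> Y) : R := fine (dist_fun F (fun _ => 0)).

Definition Bd_mul (ofR : R -> K) (mulY : Y -> Y -> Y) (F1 F2 : X -> Y) : X -> Y :=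
  fun x => if x == 0 then mulY (F1 0) (F2 0)
           else ofR (dX x 0)^-1 *: mulY (F1 x) (F2 x).
End Bd.

(* Main.v *)
Require Import Defs.
From mathcomp Require Import all_boot all_algebra.
From mathcomp Require Import all_classical all_reals all_analysis.
Import GRing.Theory Num.Theory order.Order.TTheory.
From mathcomp Require Import complex.
From mathcomp Require Import ring lra.
Local Open Scope ring_scope.
Local Open Scope classical_set_scope.

Lemma kabs_ge0 (R : realType) (b : bool) (a : scal R b) : 0 <= kabs a.
Proof. case: b a => [a|[x y]] /=; first exact: normr_ge0. exact: sqrtr_ge0. Qed.

Lemma kabs_kofR (R : realType) (b : bool) (r : R) : 0 <= r -> kabs (@kofR R b r) = r.
Proof.
case: b => /= r0; first by rewrite ger0_norm.
by rewrite expr0n /= addr0 sqrtr_sqr ger0_norm.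
Qed.

Lemma kofRV (R : realType) (b : bool) (r : R) : r != 0 ->
  @kofR R b r^-1 * kofR b r = 1.
Proof.
case: b => /= r0; first by rewrite mulVf.
by rewrite -rmorphM mulVf.
Qed.

Lemma kabs_N1 (R : realType) (b : bool) : kabs (- 1 : scal R b) = 1.
Proof.
case: b => /=; first by rewrite normrN1.
by rewrite oppr0 expr0n addr0 sqrrN expr1n sqrtr1.
Qed.
Section BdL.
Variables (R : realType) (K : fieldType) (X : lmodType K) (Y : lmodType K).
Variables (dX : X -> X -> R) (normY : Y -> R).
Hypothesis dpos : forall x, x != 0 -> 0 < dX x 0.
Hypothesis nge0 : forall y, 0 <= normY y.

Lemma Bd_bound (F : X -> Y) (M : R) : normY (F 0) <= M ->
  (forall x, x != 0 -> normY (F x) <= M * dX x 0) ->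
  Bd dX normY F /\ Bd_norm dX normY F <= M.
Proof.
move=> h0 hx.
have H : (dist_fun dX normY F (fun _ : X => 0%R : Y) <= M%:E)%E.
  rewrite /dist_fun ge_max; apply/andP; split; last by rewrite subr0 lee_fin.
  apply: ge_ereal_sup => _ [x /= xn0 <-]; rewrite subr0 lee_fin.
  by rewrite ler_pdivrMr ?dpos // hx.
have H0 : (0 <= dist_fun dX normY F (fun _ : X => 0%R : Y))%E.
  rewrite /dist_fun le_max; apply/orP; right; by rewrite lee_fin.
have Hf : (dist_fun dX normY F (fun _ : X => 0%R : Y) < +oo)%E by apply: le_lt_trans H _; exact: ltry.
split => //.
by rewrite /Bd_norm -lee_fin fineK // ge0_fin_numE.
Qed.

Lemma Bd_normE (F : X -> Y) : Bd dX normY F ->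
  (Bd_norm dX normY F)%:E = dist_fun dX normY F (fun _ : X => 0%R : Y).
Proof.
move=> hB; rewrite /Bd_norm fineK // ge0_fin_numE //.
rewrite /dist_fun le_max; apply/orP; right; by rewrite lee_fin.
Qed.

Lemma Bd_le (F : X -> Y) : Bd dX normY F ->
  normY (F 0) <= Bd_norm dX normY F /\
  (forall x, x != 0 -> normY (F x) <= Bd_norm dX normY F * dX x 0).
Proof.
move=> hB; have E := Bd_normE _ hB.
split.
  rewrite -lee_fin E /dist_fun le_max; apply/orP; right; by rewrite subr0.
move=> x xn0; rewrite -ler_pdivrMr ?dpos // -lee_fin E /dist_fun le_max; apply/orP; left.
apply: ereal_sup_ubound; exists x => //; by rewrite subr0.
Qed.

Lemma Bd_norm_ge0 (F : X -> Y) : Bd dX normY F -> 0 <= Bd_norm dX normY F.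
Proof. by move=> /(Bd_le _) [h _]; apply: le_trans h. Qed.

Definition cx (x : X) : R := if x == 0 then 1 else dX x 0.
Lemma cx_gt0 x : 0 < cx x.
Proof. rewrite /cx; case: eqP => [//|/eqP]; exact: dpos. Qed.

Lemma Bd_boundc F M : (forall x, normY (F x) <= M * cx x) ->
  Bd dX normY F /\ Bd_norm dX normY F <= M.
Proof.
move=> h; apply: Bd_bound.
  by have := h 0; rewrite /cx eqxx mulr1.
by move=> x xn0; have := h x; rewrite /cx (negbTE xn0).
Qed.

Lemma Bd_lec F : Bd dX normY F -> forall x, normY (F x) <= Bd_norm dX normY F * cx x.
Proof.
move=> /(Bd_le _) [h0 hx] x; rewrite /cx; case: eqP => [->|/eqP xn0]; first by rewrite mulr1.
exact: hx.
Qed.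

End BdL.

Theorem corollary12 (R : realType) (isReal : bool)
    (X : topologicalLmodType (scal R isReal)) (dX : X -> X -> R)
    (dX_metric : is_metric dX) (dX_topology : metric_induces_topology dX)
    (Y : lmodType (scal R isReal)) (mulY : Y -> Y -> Y) (normY : Y -> R)
    (Y_normed_alg : normed_algebra_on (@kabs R isReal) setT 0 +%R -%R *:%R mulY normY) :
  let BdXY := Bd dX normY in
  let zeroB := fun _ : X => 0 : Y in
  let addB := fun (F G : X -> Y) x => F x + G x in
  let oppB := fun (F : X -> Y) x => - F x in
  let scaleB := fun (a : scal R isReal) (F : X -> Y) x => a *: F x in
  let mulB := Bd_mul dX (@kofR R isReal) mulY in
  let normB := Bd_norm dX normY in
  normed_algebra_on (@kabs R isReal) BdXY zeroB addB oppB scaleB mulB normB /\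
  (complete_on setT +%R -%R normY -> complete_on BdXY addB oppB normB) /\
  (unital_on setT mulY normY -> unital_on BdXY mulB normB).
Proof.
move=> BdXY zeroB addB oppB scaleB mulB normB.
case: Y_normed_alg => _ [_ [_ [[mA mDr mDl mZl mZr] [nY0 nYeq0 nYZ nYD nYM]]]].
have nY0' : forall y, 0 <= normY y by move=> y; exact: nY0.
have dpos : forall x : X, x != 0 -> 0 < dX x 0.
  case: dX_metric => d0 deq _ _ x xn0; rewrite lt_def d0 andbT.
  by apply/eqP => /deq /eqP; rewrite (negbTE xn0).
have nYz : normY 0 = 0 by apply/nYeq0.
have BB := @Bd_boundc R _ X Y dX normY dpos nY0'.
have BL := @Bd_lec R _ X Y dX normY dpos nY0'.
have BG := @Bd_norm_ge0 R _ X Y dX normY dpos nY0'.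
have cpos := @cx_gt0 R _ X dX dpos.
set c := cx R _ X dX in BB BL cpos.
have zeroP : Bd dX normY zeroB /\ normB zeroB <= 0.
  by apply: BB => x; rewrite /zeroB nYz mul0r.
have addP : forall F G, Bd dX normY F -> Bd dX normY G ->
    Bd dX normY (addB F G) /\ normB (addB F G) <= normB F + normB G.
  move=> F G hF hG; apply: BB => x; rewrite /addB mulrDl.
  by apply: le_trans (nYD _ _ I I) _; apply: lerD; apply: BL.
have scaleP : forall a F, Bd dX normY F ->
    Bd dX normY (scaleB a F) /\ normB (scaleB a F) <= kabs a * normB F.
  move=> a F hF; apply: BB => x; rewrite /scaleB nYZ // -mulrA.
  by apply: ler_wpM2l; [exact: kabs_ge0 | exact: BL].
have oppP : forall F, Bd dX normY F -> Bd dX normY (oppB F).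
  move=> F hF; have [h _] := scaleP (-1) F hF.
  by have -> : oppB F = scaleB (-1) F by apply: funext => x; rewrite /oppB /scaleB scaleN1r.
have mulP : forall F G, Bd dX normY F -> Bd dX normY G ->
    Bd dX normY (mulB F G) /\ normB (mulB F G) <= normB F * normB G.
  move=> F G hF hG; apply: BB => x; rewrite /mulB /Bd_mul.
  have hF0 := BL F hF; have hG0 := BL G hG.
  case: eqP => [->|/eqP xn0].
    apply: le_trans (nYM _ _ I I) _.
    apply: le_trans (ler_pM (nY0' _) (nY0' _) (hF0 0) (hG0 0)) _.
    by rewrite /c /cx eqxx !mulr1.
  rewrite nYZ // kabs_kofR; last by rewrite invr_ge0 ltW // dpos.
  have dx := dpos x xn0.
  rewrite mulrC ler_pdivrMr //.
  apply: le_trans (nYM _ _ I I) _.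
  apply: le_trans (ler_pM (nY0' _) (nY0' _) (hF0 x) (hG0 x)) _.
  rewrite /c /cx (negbTE xn0) le_eqVlt; apply/orP; left; apply/eqP; rewrite /normB; ring.
have normA : normed_algebra_on (@kabs R isReal) BdXY zeroB addB oppB scaleB mulB normB.
  split; first split.
  - exact: zeroP.1.
  - by move=> F G hF hG; case: (addP F G hF hG).
  - exact: oppP.
  - by move=> a F hF; case: (scaleP a F hF).
  - by move=> F G hF hG; case: (mulP F G hF hG).
  split; first split.
  - by move=> F G H _ _ _; apply: funext => x; rewrite /addB addrA.
  - by move=> F G _ _; apply: funext => x; rewrite /addB addrC.
  - by move=> F _; apply: funext => x; rewrite /addB /zeroB add0r.
  - by move=> F _; apply: funext => x; rewrite /addB /oppB /zeroB addNr.
  split; first split.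
  - by move=> a b F _; apply: funext => x; rewrite /scaleB scalerA.
  - by move=> F _; apply: funext => x; rewrite /scaleB scale1r.
  - by move=> a F G _ _; apply: funext => x; rewrite /scaleB /addB scalerDr.
  - by move=> a b F _; apply: funext => x; rewrite /scaleB /addB scalerDl.
  split; first split.
  - move=> F G H _ _ _; apply: funext => x; rewrite /mulB /Bd_mul.
    case: (eqVneq x 0) => [_|_]; rewrite ?eqxx ?mA //.
    by rewrite -mZr // -mZl // mA.
  - move=> F G H _ _ _; apply: funext => x; rewrite /mulB /Bd_mul /addB.
    by case: (eqVneq x 0) => [_|_]; rewrite ?eqxx mDr // scalerDr.
  - move=> F G H _ _ _; apply: funext => x; rewrite /mulB /Bd_mul /addB.
    by case: (eqVneq x 0) => [_|_]; rewrite ?eqxx mDl // scalerDr.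
  - move=> a F G _ _; apply: funext => x; rewrite /mulB /Bd_mul /scaleB.
    case: (eqVneq x 0) => [_|_]; rewrite ?eqxx; first by rewrite mZl.
    by rewrite -mZl // !scalerA mulrC.
  - move=> a F G _ _; apply: funext => x; rewrite /mulB /Bd_mul /scaleB.
    case: (eqVneq x 0) => [_|_]; rewrite ?eqxx; first by rewrite mZr.
    by rewrite -mZr // !scalerA mulrC.
  split.
  - move=> F hF; exact: BG.
  - move=> F hF; split.
    + move=> h0; apply: funext => x; have := BL F hF x.
      rewrite /normB in h0; rewrite h0 mul0r => hle.
      by apply/nYeq0 => //; apply/le_anti; rewrite hle nY0'.
    + move=> ->; apply/le_anti; rewrite zeroP.2 BG //; exact: zeroP.1.
  - move=> a F hF; apply/le_anti/andP; split; first exact: (scaleP a F hF).2.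
    have [hB _] := scaleP a F hF.
    have [ka0|kpos] : kabs a = 0 \/ 0 < kabs a.
      by have := @kabs_ge0 _ _ a; rewrite le_eqVlt eq_sym => /predU1P [|]; [left|right].
      by rewrite ka0 mul0r; apply: BG.
    rewrite mulrC -ler_pdivlMr //; apply: (BB F _ _).2 => x.
    rewrite mulrAC ler_pdivlMr // [X in X <= _]mulrC -nYZ //; exact: BL.
  - by move=> F G hF hG; case: (addP F G hF hG).
  - by move=> F G hF hG; case: (mulP F G hF hG).
split; first exact: normA.
split.
- move=> hY u hu hC.
  have ptw : forall x, exists l, forall e, 0 < e -> exists N, forall n,
      (N <= n)%N -> normY (u n x - l) < e.
    move=> x; have [|l _ hl] := hY (fun n => u n x) (fun _ => I).
      move=> e e0; have [N hN] := hC (e / c x) (divr_gt0 e0 (cpos x)).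
      exists N => m n hm hn.
      have [hB _] := addP (u m) (oppB (u n)) (hu m) (oppP _ (hu n)).
      have := BL _ hB x; rewrite /addB /oppB => h.
      apply: le_lt_trans h _; rewrite -ltr_pdivlMr //; exact: hN.
    by exists l.
  have [l hl] := choice ptw.
  have main : forall e, 0 < e -> exists N, forall n, (N <= n)%N ->
      Bd dX normY (addB (u n) (oppB l)) /\ normB (addB (u n) (oppB l)) <= e.
    move=> e e0; have e2 : 0 < e / 2 by rewrite divr_gt0.
    have [N hN] := hC (e / 2) e2.
    exists N => n hn; apply: BB => x.
    have [N' hN'] := hl x (e / 2 * c x) (mulr_gt0 e2 (cpos x)).
    have hm : (N <= maxn N N')%N by rewrite leq_maxl.
    have hm' : (N' <= maxn N N')%N by rewrite leq_maxr.
    have [hB _] := addP (u n) (oppB (u (maxn N N'))) (hu n) (oppP _ (hu _)).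
    have h1 := BL _ hB x.
    have h2 := hN n _ hn hm.
    have h3 := hN' _ hm'.
    rewrite /addB /oppB.
    have -> : u n x - l x = (u n x - u (maxn N N') x) + (u (maxn N N') x - l x).
      by rewrite addrA subrK.
    apply: le_trans (nYD _ _ I I) _.
    rewrite (splitr e) mulrDl; apply: lerD; last exact: ltW.
    apply: le_trans h1 _; apply: ler_wpM2r; [exact: ltW (cpos x)| exact: ltW].
  have [N hN] := main 1 ltr01.
  have [hB _] := hN N (leqnn N).
  have hlB : Bd dX normY l.
    have -> : l = addB (u N) (oppB (addB (u N) (oppB l))).
      by apply: funext => x; rewrite /addB /oppB opprB addrC subrK.
    by case: (addP _ _ (hu N) (oppP _ hB)).
  exists l => // e e0.
  have e2 : 0 < e / 2 by rewrite divr_gt0.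
  have [N2 hN2] := main _ e2; exists N2 => n hn.
  have [_ h] := hN2 n hn; apply: le_lt_trans h _; lra.
- move=> [e0 _ [he0 ne0]].
  pose E := fun x : X => if x == 0 then e0 else kofR isReal (dX x 0) *: e0.
  have [EB EN] : Bd dX normY E /\ normB E <= 1.
    apply: BB => x; rewrite /E /c /cx; case: (eqVneq x 0) => [_|xn0].
      by rewrite ne0 mulr1.
    rewrite nYZ // kabs_kofR; last exact: ltW (dpos x xn0).
    by rewrite ne0 mulr1 mul1r.
  exists E => //; split; last first.
    apply/le_anti; rewrite EN /=; have := BL E EB 0.
    by rewrite /E eqxx ne0 /c /cx eqxx mulr1.
  move=> F hF; split; apply: funext => x; rewrite /mulB /Bd_mul /E;
    case: (eqVneq x 0) => [->|xn0]; rewrite ?eqxx.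
  + by case: (he0 (F 0) I).
  + have dn0 : dX x 0 != 0 by rewrite lt0r_neq0 // dpos.
    rewrite -mZl // scalerA kofRV // scale1r.
    by case: (he0 (F x) I).
  + by case: (he0 (F 0) I).
  + have dn0 : dX x 0 != 0 by rewrite lt0r_neq0 // dpos.
    rewrite -mZr // scalerA kofRV // scale1r.
    by case: (he0 (F x) I).
Qed.
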